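(* Let $n\ge 1$ be an integer, $0<\epsilon\le 1$, $0<\tau<1$, and let $G=(V,E)$ be a comparison graph. Suppose that (1) $|E|\ge \dfrac{4n}{\tau^2\epsilon^4}$, (2) $|E|\ge \dfrac{16n}{(1-\tau)^2\epsilon^4}$, and (3) $\dfrac{c(G)}{|E|^2}\le \dfrac{(1-\tau)^2\epsilon^2}{16\sqrt n}$. Then the collision-based algorithm $(G,\tau)$ is an $\epsilon$-uniformity tester for domain $[n]$.
   Context: Notation: $[n]=\{1,\dots,n\}$; $\Delta([n])$ is the set of probability distributions on $[n]$; $P_i$ is the probability of $i$ under $P$; $U_n$ is the uniform distribution on $[n]$; $\|P-Q\|=\sum_{i=1}^n|P_i-Q_i|$ ($\ell_1$ distance). A comparison graph is a finite simple undirected graph $G=(V,E)$. Given $P\in\Delta([n])$, each vertex $v\in V$ is assigned an independent sample $S(v)\sim P$; for an edge $e=\{u,v\}\in E$ the collision indicator is $\mathbf 1_e=\mathbf 1[S(u)=S(v)]$. For $\tau\in[0,1]$, the collision-based algorithm $(G,\tau)$ computes $Z=\sum_{e\in E}\mathbf 1_e$ and $T=|E|\cdot\frac{1+\tau\epsilon^2}{n}$, and outputs YES if $Z<T$ and NO otherwise. It is an $\epsilon$-uniformity tester (for domain $[n]$) if, when $P=U_n$, it outputs YES with probability at least $3/4$, and for every $P\in\Delta([n])$ with $\|P-U_n\|\ge\epsilon$ it outputs NO with probability at least $3/4$. $c(G)$ denotes the number of ordered triples $(u,v,w)$ of distinct vertices with $\{u,v\}\in E$ and $\{v,w\}\in E$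 (equivalently $c(G)=\sum_{v\in V}d_v(d_v-1)$, $d_v$ the degree of $v$). *)

(* Defs.v *)
From HB Require Import structures.
From mathcomp Require Import all_boot all_order all_algebra.
From mathcomp Require Import reals.
Import Order.TTheory GRing.Theory Num.Theory.
Local Open Scope ring_scope.

Section Defs.
Variable R : realType.

Definition is_distr (n : nat) (P : 'I_n -> R) : Prop :=
  (forall i, 0 <= P i) /\ \sum_(i < n) P i = 1.

Definition unif (n : nat) : 'I_n -> R := fun _ => n%:R^-1.

Definition l1dist (n : nat) (P Q : 'I_n -> R) : R :=
  \sum_(i < n) `|P i - Q i|.

Variable V : finType.

(* edge set of the simple graph given by a symmetric irreflexive relation e *)
Definition edges (e : rel V) : {set {set V}} :=
  [set [set p.1; p.2] | p in [set p : V * V | e p.1 p.2]].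

Definition cG (e : rel V) : nat :=
  #|[set t : V * V * V |
      [&& t.1.1 != t.1.2, t.1.2 != t.2, t.1.1 != t.2,
          e t.1.1 t.1.2 & e t.1.2 t.2]]|.

Definition collisions (n : nat) (e : rel V) (S : {ffun V -> 'I_n}) : nat :=
  #|[set f in edges e | [forall u in f, forall v in f, S u == S v]]|.

(* probability, under i.i.d. samples S(v) ~ P, of an event on the samples *)
Definition prob (n : nat) (P : 'I_n -> R) (A : pred {ffun V -> 'I_n}) : R :=
  \sum_(S : {ffun V -> 'I_n} | A S) \prod_(v : V) P (S v).

Definition threshold (n : nat) (e : rel V) (tau eps : R) : R :=
  #|edges e|%:R * (1 + tau * eps ^+ 2) / n%:R.

Definition outputs_yes (n : nat) (e : rel V) (tau eps : R)
    (S : {ffun V -> 'I_n}) : bool :=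
  (collisions n e S)%:R < threshold n e tau eps.

Definition is_uniformity_tester (n : nat) (e : rel V) (tau eps : R) : Prop :=
  prob n (unif n) (fun S => outputs_yes n e tau eps S) >= 3 / 4 /\
  forall P : 'I_n -> R, is_distr n P -> l1dist n P (unif n) >= eps ->
    prob n P (fun S => ~~ outputs_yes n e tau eps S) >= 3 / 4.
End Defs.
Arguments is_uniformity_tester {R V} n e tau eps.

(* Main.v *)
Require Import Defs.
From HB Require Import structures.
From mathcomp Require Import all_boot all_order all_algebra.
From mathcomp Require Import reals.
From mathcomp Require Import ring lra zify.
Import Order.TTheory GRing.Theory Num.Theory.
Local Open Scope ring_scope.
Set Implicit Arguments.
Unset Strict Implicit.

Definition wt (R : realType) (n : nat) (V : finType) (P : 'I_n -> R)
  (S : {ffun V -> 'I_n}) : R := \prod_v P (S v).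

Definition Ex (R : realType) (n : nat) (V : finType) (P : 'I_n -> R)
  (F : {ffun V -> 'I_n} -> R) : R := \sum_S wt P S * F S.

Lemma prod_ind (R : realType) (V : finType) (b : V -> bool) :
  \prod_v ((b v)%:R : R) = ([forall v, b v])%:R.
Proof.
case: (boolP [forall v, b v]) => H.
  by apply: big1 => v _; rewrite (forallP H).
move/forallPn: H => [v Hv]; by rewrite (bigD1 v) //= (negbTE Hv) mul0r.
Qed.

Lemma Ex_all (R : realType) (n : nat) (V : finType) (P : 'I_n -> R)
  (a : V -> pred 'I_n) :
  Ex P (fun S => ([forall v, a v (S v)])%:R) = \prod_v \sum_(x | a v x) P x.
Proof.
rewrite /Ex /wt.
transitivity (\prod_v \sum_x (P x * (a v x)%:R)); last first.
  apply: eq_bigr => v _; rewrite [RHS]big_mkcond /=.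
  by apply: eq_bigr => x _; case: (a v x); rewrite ?mulr1 ?mulr0.
rewrite bigA_distr_bigA /=; apply: eq_bigr => S _.
by rewrite -(@prod_ind R _ (fun v => a v (S v))) -big_split.
Qed.

Lemma Ex_lin (R : realType) (n : nat) (V : finType) (P : 'I_n -> R)
  (F G : {ffun V -> 'I_n} -> R) (a b : R) :
  Ex P (fun S => a * F S + b * G S) = a * Ex P F + b * Ex P G.
Proof.
rewrite /Ex !mulr_sumr -big_split /=; apply: eq_bigr => S _; ring.
Qed.

Lemma Ex_sum (R : realType) (n : nat) (V : finType) (P : 'I_n -> R)
  (I : finType) (A : pred I) (F : I -> {ffun V -> 'I_n} -> R) :
  Ex P (fun S => \sum_(i in A) F i S) = \sum_(i in A) Ex P (F i).
Proof.
rewrite /Ex (exchange_big) /=; apply: eq_bigr => S _; by rewrite mulr_sumr.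
Qed.

Lemma Ex_one (R : realType) (n : nat) (V : finType) (P : 'I_n -> R) :
  \sum_i P i = 1 -> Ex P (fun _ : {ffun V -> 'I_n} => 1) = 1.
Proof.
move=> H1.
have := @Ex_all R n V P (fun _ _ => true).
rewrite (_ : \prod_v \sum_(x | true) P x = 1); last first.
  by apply: big1 => v _; rewrite H1.
move=> E; rewrite -[RHS]E.
rewrite /Ex; apply: eq_bigr => S _.
rewrite (_ : [forall v : V, true]) ?mulr1 //.
by apply/forallP.

Qed.

Lemma prod_if (R : realType) (V : finType) (A : {set V}) (c : R) :
  \prod_v (if v \in A then c else 1) = c ^+ #|A|.
Proof. by rewrite -big_mkcond prodr_const. Qed.

Lemma E_pair (R : realType) (n : nat) (V : finType) (P : 'I_n -> R)
  (f g : {set V}) (k l : 'I_n) : \sum_i P i = 1 ->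
  Ex P (fun S => ([forall v in f, S v == k] && [forall v in g, S v == l])%:R)
  = P k ^+ #|f| * P l ^+ #|g :\: f| * ((k == l)%:R) ^+ #|f :&: g|.
Proof.
move=> H1.
pose a := fun (v : V) (x : 'I_n) => ((v \in f) ==> (x == k)) && ((v \in g) ==> (x == l)).
transitivity (Ex P (fun S => ([forall v, a v (S v)])%:R)).
  rewrite /Ex; apply: eq_bigr => S _; congr (_ * _%:R).
  congr (nat_of_bool _); apply/idP/idP.
    by move=> /andP [/forallP Hf /forallP Hg]; apply/forallP => v; rewrite /a Hf Hg.
  move=> /forallP H; apply/andP; split; apply/forallP => v; move: (H v); rewrite /a => /andP [] //.
rewrite Ex_all -!prod_if -!big_split /=; apply: eq_bigr => v _.
rewrite /a inE in_setI.
case: (boolP (v \in f)) => vf; case: (boolP (v \in g)) => vg /=;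
  rewrite ?mulr1 ?mul1r.
- case: (eqVneq k l) => [<-|kl] /=.
    by rewrite mulr1 (big_pred1 k) // => x /=; rewrite andbb.
  rewrite mulr0 big_pred0 // => x /=; apply/negP => /andP [/eqP -> /eqP].
  by move/eqP: kl.
- by rewrite (big_pred1 k) // => x /=; rewrite andbT.
- by rewrite big_pred1_eq.
- by rewrite H1.
Qed.

Definition Xf (n : nat) (V : finType) (S : {ffun V -> 'I_n}) (f : {set V}) : bool :=
  [forall u in f, forall v in f, S u == S v].

Lemma Xf_sum (R : realType) (n : nat) (V : finType) (S : {ffun V -> 'I_n})
  (f : {set V}) : f != set0 ->
  ((Xf S f)%:R : R) = \sum_k ([forall v in f, S v == k])%:R.
Proof.
case/set0Pn => a af.
case: (boolP (Xf S f)) => H.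
  rewrite (bigD1 (S a)) //= big1 ?addr0.
    suff -> : [forall v in f, S v == S a] by [].
    by apply/forallP => v; apply/implyP => vf; move/forallP: H => /(_ v) /implyP /(_ vf) /forallP /(_ a) /implyP /(_ af).
  move=> k kn; suff -> : [forall v in f, S v == k] = false by [].
  apply/negP => /forallP /(_ a) /implyP /(_ af) /eqP Ha.
  by move: kn; rewrite Ha eqxx.
rewrite big1 // => k _.
suff -> : [forall v in f, S v == k] = false by [].
apply/negP => /forallP Hk; move/negP: H; apply.
apply/forallP => u; apply/implyP => uf; apply/forallP => v; apply/implyP => vf.
by move: (Hk u) (Hk v); rewrite uf vf /= => /eqP -> /eqP ->.
Qed.

Lemma E_XX (R : realType) (n : nat) (V : finType) (P : 'I_n -> R)
  (f g : {set V}) : \sum_i P i = 1 -> f != set0 -> g != set0 ->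
  Ex P (fun S => (Xf S f)%:R * (Xf S g)%:R)
  = \sum_k \sum_l P k ^+ #|f| * P l ^+ #|g :\: f| * ((k == l)%:R) ^+ #|f :&: g|.
Proof.
move=> H1 fn gn.
transitivity (Ex P (fun S => \sum_k \sum_l
   (([forall v in f, S v == k] && [forall v in g, S v == l])%:R : R))).
  rewrite /Ex; apply: eq_bigr => S _; congr (_ * _).
  rewrite (@Xf_sum R _ _ S _ fn) (@Xf_sum R _ _ S _ gn) mulr_suml; apply: eq_bigr => k _.
  by rewrite mulr_sumr; apply: eq_bigr => l _; rewrite -natrM mulnb.
rewrite Ex_sum; apply: eq_bigr => k _.
rewrite Ex_sum; apply: eq_bigr => l _.
by rewrite E_pair.
Qed.

Lemma sum_delta (R : realType) (n : nat) (F : 'I_n -> R) (k : 'I_n) (j : nat) :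
  (0 < j)%N -> \sum_l F l * ((k == l)%:R) ^+ j = F k.
Proof.
move=> j0; rewrite (bigD1 k) //= eqxx expr1n mulr1 big1 ?addr0 // => l lk.
by rewrite eq_sym (negbTE lk) expr0n; case: j j0 => // j _; rewrite mulr0.
Qed.

Lemma edge_split (V : finType) (e : rel V) (f : {set V}) (x : V) :
  symmetric e -> f \in edges V e -> x \in f -> exists u, e u x /\ f = [set u; x].
Proof.
move=> esym /imsetP [[a b]] /=; rewrite inE /= => eab -> /set2P [->|->].
  by exists b; rewrite esym setUC.
by exists a.
Qed.

Lemma edge_card (V : finType) (e : rel V) (f : {set V}) :
  irreflexive e -> f \in edges V e -> #|f| = 2%N.
Proof.
move=> eirr /imsetP [[a b]] /=; rewrite inE /= => eab ->.
rewrite cards2; case: (eqVneq a b) => // ab.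
by move: eab; rewrite ab eirr.
Qed.

Lemma inter_card (V : finType) (f g : {set V}) :
  #|f| = 2%N -> #|g| = 2%N -> f != g -> f :&: g != set0 -> #|f :&: g| = 1%N.
Proof.
move=> cf cg fg fgn.
have h1 : (0 < #|f :&: g|)%N by rewrite card_gt0.
have h2 : (#|f :&: g| <= 2)%N by rewrite -cf subset_leq_card // subsetIl.
suff : #|f :&: g| != 2%N by lia.
apply/negP => /eqP h; move/negP: fg; apply.
have e1 : f :&: g == f by rewrite eqEcard subsetIl h cf.
have e2 : f :&: g == g by rewrite eqEcard subsetIr h cg.
by rewrite -(eqP e1) (eqP e2).
Qed.

Definition pw (R : realType) (n : nat) (P : 'I_n -> R) (j : nat) : R :=
  \sum_k P k ^+ j.

Lemma E_XXe (R : realType) (n : nat) (V : finType) (e : rel V) (P : 'I_n -> R)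
  (f g : {set V}) : \sum_i P i = 1 -> irreflexive e ->
  f \in edges V e -> g \in edges V e ->
  Ex P (fun S => (Xf S f)%:R * (Xf S g)%:R)
  = if f == g then pw P 2 else if f :&: g != set0 then pw P 3 else pw P 2 ^+ 2.
Proof.
move=> H1 eirr fE gE.
have cf := edge_card eirr fE; have cg := edge_card eirr gE.
have fn : f != set0 by rewrite -card_gt0 cf.
have gn : g != set0 by rewrite -card_gt0 cg.
rewrite E_XX //.
case: (eqVneq f g) => [<-|fg].
  rewrite setDv cards0 setIid cf /pw; apply: eq_bigr => k _.
  by rewrite (sum_delta (fun l => P k ^+ 2 * P l ^+ 0)) // expr0 mulr1.
case: (boolP (f :&: g != set0)) => fgn.
  have ci := inter_card cf cg fg fgn.
  have cd : #|g :\: f| = 1%N by rewrite cardsD setIC ci cg.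
  rewrite cd ci cf /pw; apply: eq_bigr => k _.
  by rewrite (sum_delta (fun l => P k ^+ 2 * P l ^+ 1)) // expr1 -exprSr.
move/negPn/eqP: fgn => fg0.
have cd : #|g :\: f| = 2%N by rewrite cardsD setIC fg0 cards0 cg.
rewrite cd fg0 cards0 cf /pw expr2 mulr_suml; apply: eq_bigr => k _.
rewrite mulr_sumr; apply: eq_bigr => l _; by rewrite expr0 mulr1.
Qed.

Lemma Z_sum (R : realType) (n : nat) (V : finType) (e : rel V) (S : {ffun V -> 'I_n}) :
  ((collisions V n e S)%:R : R) = \sum_(f in edges V e) (Xf S f)%:R.
Proof.
rewrite /collisions -sum1_card natr_sum big_mkcond /= [RHS]big_mkcond /=.
apply: eq_bigr => f _; rewrite inE /Xf.
by case: (f \in edges V e); case: [forall u in f, _].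
Qed.

Lemma Ex_affine (R : realType) (n : nat) (V : finType) (P : 'I_n -> R)
  (F G : {ffun V -> 'I_n} -> R) (a b : R) : \sum_i P i = 1 ->
  Ex P (fun S => F S + a * G S + b) = Ex P F + a * Ex P G + b.
Proof.
move=> H1.
have := @Ex_one R n V P H1; rewrite /Ex => E1.
rewrite -[b in RHS]mulr1 -E1 !mulr_sumr -!big_split /=.
by apply: eq_bigr => S _; ring.
Qed.

Definition N1 (V : finType) (e : rel V) : nat :=
  \sum_(f in edges V e) \sum_(g in edges V e) ((f != g) && (f :&: g != set0)).

Lemma EZ (R : realType) (n : nat) (V : finType) (e : rel V) (P : 'I_n -> R) :
  \sum_i P i = 1 -> irreflexive e ->
  Ex P (fun S => (collisions V n e S)%:R) = #|edges V e|%:R * pw P 2.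
Proof.
move=> H1 eirr.
transitivity (Ex P (fun S => \sum_(f in edges V e) ((Xf S f)%:R : R))).
  by rewrite /Ex; apply: eq_bigr => S _; rewrite Z_sum.
rewrite Ex_sum.
rewrite -sum1_card natr_sum mulr_suml; apply: eq_bigr => f fE.
have := E_XXe (g := f) H1 eirr fE fE; rewrite eqxx mul1r => <-.
by apply: eq_bigr => S _; rewrite -natrM mulnb andbb.
Qed.

Lemma EZ2 (R : realType) (n : nat) (V : finType) (e : rel V) (P : 'I_n -> R) :
  \sum_i P i = 1 -> irreflexive e ->
  Ex P (fun S => (collisions V n e S)%:R ^+ 2) =
  \sum_(f in edges V e) \sum_(g in edges V e)
     (if f == g then pw P 2 else if f :&: g != set0 then pw P 3 else pw P 2 ^+ 2).
Proof.
move=> H1 eirr.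
transitivity (Ex P (fun S => \sum_(f in edges V e) \sum_(g in edges V e)
   (((Xf S f)%:R : R) * (Xf S g)%:R))).
  rewrite /Ex; apply: eq_bigr => S _; rewrite Z_sum expr2 mulr_suml.
  by congr (_ * _); apply: eq_bigr => f _; rewrite mulr_sumr.
rewrite Ex_sum; apply: eq_bigr => f fE.
rewrite Ex_sum; apply: eq_bigr => g gE.
by rewrite (E_XXe H1 eirr fE gE).
Qed.

Lemma sum_bool_card (T : finType) (C b : pred T) :
  \sum_(i | C i) (b i : nat) = #|[set i | C i && b i]|.
Proof.
rewrite -sum1_card big_mkcond [RHS]big_mkcond /=.
by apply: eq_bigr => i _; rewrite inE; case: (C i); case: (b i).
Qed.

Lemma N1_le (V : finType) (e : rel V) :
  symmetric e -> irreflexive e -> (N1 e <= cG V e)%N.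
Proof.
move=> esym eirr.
rewrite /N1 pair_big_dep /= sum_bool_card /cG.
set D := [set t : V * V * V | _].
apply: (leq_trans _ (leq_imset_card
   (fun t : V * V * V => ([set t.1.1; t.1.2], [set t.1.2; t.2])) (mem D))).
apply: subset_leq_card; apply/subsetP => [[f g]].
rewrite inE /= => /andP [/andP [fE gE] /andP [fg fgn]].
case/set0Pn: fgn => x; rewrite in_setI => /andP [xf xg].
have [u [eux fu]] := edge_split esym fE xf.
have [w [ewx gw]] := edge_split esym gE xg.
apply/imsetP; exists (u, x, w); last by rewrite /= fu gw (setUC [set w]).
rewrite inE /=.
have ux : u != x by apply/eqP => h; move: eux; rewrite h eirr.
have xw : x != w by apply/eqP => h; move: ewx; rewrite h eirr.
have uw : u != w by apply/eqP => h; move: fg; rewrite fu gw h eqxx.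
by rewrite ux xw uw eux esym ewx.
Qed.

Lemma wt_ge0 (R : realType) (n : nat) (V : finType) (P : 'I_n -> R) (S : {ffun V -> 'I_n}) :
  (forall i, 0 <= P i) -> 0 <= wt P S.
Proof. by move=> Hp; apply: prodr_ge0 => v _. Qed.

Lemma cheb (R : realType) (n : nat) (V : finType) (P : 'I_n -> R)
  (A : pred {ffun V -> 'I_n}) (F : {ffun V -> 'I_n} -> R) (t2 : R) :
  (forall i, 0 <= P i) -> 0 < t2 -> (forall S, 0 <= F S) ->
  (forall S, A S -> t2 <= F S) -> prob R V n P A <= Ex P F / t2.
Proof.
move=> Hp t0 F0 HA.
rewrite /prob /Ex mulr_suml.
apply: (le_trans (y := \sum_(S | A S) wt P S * F S / t2)).
  apply: ler_sum => S AS; rewrite -mulrA ler_peMr ?wt_ge0 //.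
  by rewrite ler_pdivlMr // mul1r HA.
rewrite [X in _ <= X](bigID A) /= lerDl; apply: sumr_ge0 => S _.
by apply: divr_ge0; [apply: mulr_ge0; [apply: wt_ge0|]|apply: ltW].
Qed.

Lemma prob_compl (R : realType) (n : nat) (V : finType) (P : 'I_n -> R)
  (A : pred {ffun V -> 'I_n}) : \sum_i P i = 1 ->
  prob R V n P A + prob R V n P (fun S => ~~ A S) = 1.
Proof.
move=> H1; have := @Ex_one R n V P H1; rewrite /Ex /prob => E1; rewrite -[RHS]E1.
rewrite [RHS](bigID A) /=; congr (_ + _); apply: eq_bigr => S _; by rewrite mulr1.
Qed.

Lemma Var_eq (R : realType) (n : nat) (V : finType) (e : rel V) (P : 'I_n -> R) :
  \sum_i P i = 1 -> irreflexive e ->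
  Ex P (fun S => ((collisions V n e S)%:R - #|edges V e|%:R * pw P 2) ^+ 2) =
  #|edges V e|%:R * (pw P 2 - pw P 2 ^+ 2) + (N1 e)%:R * (pw P 3 - pw P 2 ^+ 2).
Proof.
move=> H1 eirr.
have Hc : forall c : R, \sum_(f in edges V e) \sum_(g in edges V e) c
    = #|edges V e|%:R * #|edges V e|%:R * c.
  move=> c; rewrite !sumr_const; move: #|edges V e| => k.
  by rewrite -mulrnA -(mulr_natl c) natrM.
have Hd : forall x : R,
   \sum_(f in edges V e) \sum_(g in edges V e) ((f == g)%:R * x)
   = #|edges V e|%:R * x.
  move=> x; rewrite -sum1_card natr_sum mulr_suml; apply: eq_bigr => f fE.
  rewrite (bigD1 f) //= eqxx mul1r big1 ?addr0 ?mul1r // => g /andP [_ gf].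
  by rewrite eq_sym (negbTE gf) mul0r.
have HN : forall x : R, \sum_(f in edges V e) \sum_(g in edges V e)
     (((f != g) && (f :&: g != set0))%:R * x)
   = (N1 e)%:R * x.
  move=> x; rewrite /N1 natr_sum mulr_suml; apply: eq_bigr => f _.
  by rewrite natr_sum mulr_suml.
move: (@Ex_affine R n V P (fun S => ((collisions V n e S)%:R : R) ^+ 2)
   (fun S => ((collisions V n e S)%:R : R))
   (- 2 * (#|edges V e|%:R * pw P 2)) ((#|edges V e|%:R * pw P 2) ^+ 2) H1).
rewrite EZ // EZ2 // => HA.
have -> : Ex P (fun S => ((collisions V n e S)%:R - #|edges V e|%:R * pw P 2) ^+ 2)
   = Ex P (fun S => ((collisions V n e S)%:R : R) ^+ 2 +
      - 2 * (#|edges V e|%:R * pw P 2) * (collisions V n e S)%:R +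
      (#|edges V e|%:R * pw P 2) ^+ 2).
  rewrite /Ex; apply: eq_bigr => S _; congr (_ * _).
  move: ((collisions V n e S)%:R) (#|edges V e|%:R) (pw P 2) => z m p; ring.
rewrite HA.
have -> : \sum_(f in edges V e) \sum_(g in edges V e)
     (if f == g then pw P 2 else if f :&: g != set0 then pw P 3 else pw P 2 ^+ 2)
  = \sum_(f in edges V e) \sum_(g in edges V e)
     (pw P 2 ^+ 2 + (f == g)%:R * (pw P 2 - pw P 2 ^+ 2)
       + ((f != g) && (f :&: g != set0))%:R * (pw P 3 - pw P 2 ^+ 2)).
  apply: eq_bigr => f _; apply: eq_bigr => g _.
  move: (pw P 2) (pw P 3) => p q.
  case: (eqVneq f g) => _ /=; rewrite ?mul1r ?mul0r ?addr0.
    ring.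
  by case: (f :&: g != set0); rewrite ?mul1r ?mul0r ?addr0 //; ring.
under eq_bigr do rewrite big_split /= big_split /=.
rewrite big_split /= big_split /=.
rewrite Hc Hd HN.
move: (#|edges V e|%:R) ((N1 e)%:R) (pw P 2) (pw P 3) => m N p q; ring.
Qed.


Lemma sum_lin (R : realType) (n : nat) (F G : 'I_n -> R) (a c : R) :
  \sum_i (F i + a * G i + c) = \sum_i F i + a * \sum_i G i + n%:R * c.
Proof.
rewrite !big_split /= -mulr_sumr sumr_const card_ord mulr_natl //.
Qed.

Lemma sum_ge_term (R : realType) (n : nat) (F : 'I_n -> R) (j : 'I_n) :
  (forall i, 0 <= F i) -> F j <= \sum_i F i.
Proof.
move=> H; rewrite (bigD1 j) //= lerDl; apply: sumr_ge0 => i _; exact: H.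
Qed.

Lemma unif_sum (R : realType) (n : nat) : (0 < n)%N -> \sum_(i < n) unif R n i = 1.
Proof.
move=> n0; rewrite /unif sumr_const card_ord -(mulr_natl (n%:R^-1)) mulfV //.
by rewrite pnatr_eq0 -lt0n.
Qed.

Lemma unif_pw (R : realType) (n : nat) (j : nat) :
  pw (unif R n) j = n%:R * (n%:R^-1) ^+ j.
Proof. by rewrite /pw /unif sumr_const card_ord -(mulr_natl ((n%:R^-1) ^+ j)). Qed.

Lemma far_facts (R : realType) (n : nat) (P : 'I_n -> R) (eps : R) :
  (0 < n)%N -> is_distr R n P -> 0 < eps -> l1dist R n P (unif R n) >= eps ->
  let Ni := n%:R^-1 in let d := pw P 2 - Ni in
  eps ^+ 2 * Ni <= d /\ pw P 3 - pw P 2 ^+ 2 <= Ni * d + Num.sqrt d * d.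
Proof.
move=> n0 [P0 P1] eps0 hl Ni d.
have nN : n%:R * Ni = 1 :> R by rewrite mulfV // pnatr_eq0 -lt0n.
have dE : d = pw P 2 - Ni by [].
have Ni0 : 0 <= Ni by rewrite invr_ge0 ler0n.
have hs0 : eps <= \sum_i `|P i - Ni| by [].
clearbody d Ni.
set D := fun i => P i - Ni.
have S0 : \sum_i D i = 0.
  have := sum_lin P (fun _ => 0) 0 (- Ni).
  rewrite P1 !mul0r addr0 mulrN nN subrr => E; rewrite -[RHS]E.
  by apply: eq_bigr => i _; rewrite /D addr0.
have S2 : \sum_i D i ^+ 2 = d.
  have := sum_lin (fun i => P i ^+ 2) P (- 2 * Ni) (Ni ^+ 2).
  rewrite P1 -/(pw P 2) => E.
  transitivity (pw P 2 + - 2 * Ni * 1 + n%:R * Ni ^+ 2).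
    rewrite -E; apply: eq_bigr => i _; rewrite /D; ring.
  have hb : n%:R * Ni * Ni = Ni by rewrite nN mul1r.
  rewrite dE; nra.
set s := \sum_i `|D i|.
have hs : eps <= s by exact: hs0.
have CS : s ^+ 2 * Ni <= d.
  have H0 : 0 <= \sum_i (`|D i| - s * Ni) ^+ 2 by apply: sumr_ge0 => i _; exact: sqr_ge0.
  have := sum_lin (fun i => D i ^+ 2) (fun i => `|D i|) (- 2 * s * Ni) ((s * Ni) ^+ 2).
  rewrite S2 -/s => E.
  have : \sum_i (`|D i| - s * Ni) ^+ 2 = d + - 2 * s * Ni * s + n%:R * (s * Ni) ^+ 2.
    rewrite -E; apply: eq_bigr => i _; rewrite -[D i ^+ 2]real_normK ?num_real //; ring.
  move=> E2; rewrite E2 in H0.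
  have hb : n%:R * Ni * Ni = Ni by rewrite nN mul1r.
  have := congr1 (fun x => s ^+ 2 * x) hb; rewrite /= => hb2.
  nra.
split.
  apply: le_trans CS; rewrite ler_wpM2r //.
  by rewrite ler_pXn2r // ?nnegrE ?ltW //; apply: lt_le_trans hs.
have d0 : 0 <= d by rewrite -S2; apply: sumr_ge0 => i _; exact: sqr_ge0.
have S3 : \sum_i D i ^+ 3 <= Num.sqrt d * d.
  rewrite -S2 mulr_sumr; apply: ler_sum => i _.
  have hD : `|D i| <= Num.sqrt d.
    rewrite -sqrtr_sqr ler_sqrt // -S2.
    apply: (sum_ge_term (F := fun i => D i ^+ 2)) => j; exact: sqr_ge0.
  apply: (le_trans (y := `|D i| * D i ^+ 2)).
    rewrite exprSr [X in X <= _]mulrC ler_wpM2r ?sqr_ge0 //.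
    by rewrite real_ler_norm ?num_real.
  by rewrite ler_wpM2r ?sqr_ge0 // S2.
have E3 : pw P 3 = \sum_i D i ^+ 3 + 3 * Ni * d + Ni ^+ 2.
  transitivity (\sum_i (D i ^+ 3 + 3 * Ni * D i ^+ 2 + 3 * Ni ^+ 2 * D i + Ni ^+ 3)).
    by apply: eq_bigr => i _; rewrite /D; ring.
  rewrite !big_split /=.
  have -> : \sum_i (3 * Ni * D i ^+ 2) = 3 * Ni * d by rewrite -mulr_sumr S2.
  have -> : \sum_i (3 * Ni ^+ 2 * D i) = 0 by rewrite -mulr_sumr S0 mulr0.
  have -> : \sum_(i < n) Ni ^+ 3 = Ni ^+ 2.
    rewrite sumr_const card_ord -(mulr_natl (Ni ^+ 3)) exprS mulrA nN mul1r //.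
  by rewrite addr0.
have E2 : pw P 2 = Ni + d by rewrite dE; ring.
rewrite E3 E2.
have : 0 <= d ^+ 2 by exact: sqr_ge0.
move: S3; move: (\sum_i D i ^+ 3) (Num.sqrt d * d) => x y.
nra.
Qed.

Unset Implicit Arguments.
Set Strict Implicit.

Lemma arith_unif (R : realType) (m N Ni a : R) :
  0 < m -> 0 < N -> N * Ni = 1 -> 0 < a -> 4 * N / (a ^+ 2) <= m ->
  (m * (Ni - Ni ^+ 2)) / (m * a * Ni) ^+ 2 <= 1 / 4.
Proof.
move=> m0 N0 nN a0 h1.
have Ni0 : 0 < Ni.
  have : 0 < N * Ni by rewrite nN.
  by rewrite pmulr_rgt0.
have a2 : 0 < a ^+ 2 by rewrite exprn_gt0.
rewrite ler_pdivrMr in h1 => //.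
have t0 : 0 < (m * a * Ni) ^+ 2 by rewrite exprn_gt0 // !mulr_gt0.
rewrite ler_pdivrMr //.
have h' : 0 <= m * Ni ^+ 2 by rewrite mulr_ge0 ?sqr_ge0 // ltW.
have h : 4 * N * (m * Ni ^+ 2) <= m * a ^+ 2 * (m * Ni ^+ 2).
  by rewrite ler_wpM2r.
have e : N * Ni ^+ 2 = Ni by rewrite expr2 mulrA nN mul1r.
nra.
Qed.

Lemma arith_far (R : realType) (m N Ni eps tau d r s c : R) :
  0 < m -> 1 <= N -> N * Ni = 1 -> 0 < eps -> eps <= 1 -> 0 < tau -> tau < 1 ->
  eps ^+ 2 * Ni <= d -> 0 <= r -> r ^+ 2 = d -> 0 <= s -> s ^+ 2 = N -> 0 <= c ->
  16 * N / ((1 - tau) ^+ 2 * eps ^+ 4) <= m ->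
  c / (m ^+ 2) <= (1 - tau) ^+ 2 * eps ^+ 2 / (16 * s) ->
  (m * (Ni + d) + c * (Ni * d + r * d)) / (m * (1 - tau) * d) ^+ 2 <= 1 / 4.
Proof.
move=> m0 N1 nN e0 e1 t0 t1 hd r0 rd s0 sN c0 h2 h3.
have N0 : 0 < N by lra.
have Ni0 : 0 < Ni.
  have : 0 < N * Ni by rewrite nN.
  by rewrite pmulr_rgt0.
set K := (1 - tau) ^+ 2.
have K0 : 0 < K by rewrite /K exprn_gt0 // subr_gt0.
have e2 : 0 < eps ^+ 2 by rewrite exprn_gt0.
have e4 : 0 < eps ^+ 4 by rewrite exprn_gt0.
have d0 : 0 < d by apply: lt_le_trans hd; rewrite mulr_gt0.
have s1 : 1 <= s.
  have : 1 <= s ^+ 2 by rewrite sN.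
  move=> h; nra.
have H2 : 16 * N <= m * (K * eps ^+ 4).
  by rewrite -ler_pdivrMr // mulr_gt0.
have H3 : c * (16 * s) <= K * eps ^+ 2 * m ^+ 2.
  rewrite -ler_pdivlMr ?mulr_gt0 //; last by lra.
  rewrite ler_pdivrMr ?exprn_gt0 // in h3.
  by rewrite mulrAC.
have t2 : 0 < (m * (1 - tau) * d) ^+ 2 by rewrite exprn_gt0 // !mulr_gt0 // subr_gt0.
rewrite ler_pdivrMr //.
have -> : (m * (1 - tau) * d) ^+ 2 = m ^+ 2 * K * d ^+ 2.
  by rewrite /K; ring.
have Nd : eps ^+ 2 <= N * d.
  have := ler_wpM2l (ltW N0) hd; rewrite mulrCA nN mulr1 //.
have star : eps ^+ 4 * (Ni + d) <= 2 * N * d ^+ 2.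
  have q1 : eps ^+ 2 * d <= N * d * d by rewrite ler_wpM2r // ltW.
  have q2 : eps ^+ 4 * Ni <= eps ^+ 2 * d.
    have := ler_wpM2l (ltW e2) hd; lra.
  have q3 : eps ^+ 4 * d <= eps ^+ 2 * d.
    have h : eps ^+ 2 <= 1 by rewrite exprn_ile1 // ltW.
    have := ler_wpM2r (ltW d0) (ler_wpM2l (ltW e2) h); lra.
  rewrite expr2; lra.
have A : 8 * (m * (Ni + d)) <= m ^+ 2 * K * d ^+ 2.
  rewrite -(ler_pM2r e4).
  have q : 16 * N * (m * d ^+ 2) <= m * (K * eps ^+ 4) * (m * d ^+ 2).
    by rewrite ler_wpM2r // mulr_ge0 ?sqr_ge0 // ltW.
  have q' : 8 * m * (eps ^+ 4 * (Ni + d)) <= 8 * m * (2 * N * d ^+ 2).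
    by rewrite ler_wpM2l // mulr_ge0 // ltW.
  nra.
have sr : eps <= s * r.
  have : eps ^+ 2 <= (s * r) ^+ 2 by rewrite exprMn sN rd.
  have := mulr_ge0 s0 r0; nra.
have star2 : eps ^+ 2 * (Ni + r) <= 2 * s * d.
  have q1 : eps * r <= s * r * r by rewrite ler_wpM2r.
  have q2 : eps ^+ 2 * r <= eps * r.
    have := ler_wpM2r r0 e1; have := ler_wpM2l (ltW e0) (ler_wpM2r r0 e1); lra.
  have q3 : d <= s * d by rewrite ler_peMl // ltW.
  have q4 : s * r * r = s * d by rewrite -rd expr2 mulrA.
  lra.
have B : 8 * (c * (Ni * d + r * d)) <= m ^+ 2 * K * d ^+ 2.
  have -> : c * (Ni * d + r * d) = c * (Ni + r) * d by ring.
  have -> : m ^+ 2 * K * d ^+ 2 = (m ^+ 2 * K * d) * d by rewrite expr2; ring.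
  rewrite mulrA (ler_wpM2r (ltW d0)) //.
  rewrite -(ler_pM2r e2).
  have q : c * (16 * s) * d <= K * eps ^+ 2 * m ^+ 2 * d by rewrite ler_wpM2r // ltW.
  have q' : 8 * c * (eps ^+ 2 * (Ni + r)) <= 8 * c * (2 * s * d).
    by rewrite ler_wpM2l // mulr_ge0.
  nra.
lra.
Qed.

Lemma sq_mono (R : realType) (a b : R) : 0 <= a -> a <= b -> a ^+ 2 <= b ^+ 2.
Proof. move=> a0 ab; nra. Qed.

Theorem theorem1 (R : realType) (n : nat) (eps tau : R) (V : finType) (e : rel V)
  (hn : (1 <= n)%N) (heps0 : 0 < eps) (heps1 : eps <= 1)
  (htau0 : 0 < tau) (htau1 : tau < 1)
  (esym : symmetric e) (eirr : irreflexive e)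
  (h1 : #|edges V e|%:R >= 4 * n%:R / (tau ^+ 2 * eps ^+ 4))
  (h2 : #|edges V e|%:R >= 16 * n%:R / ((1 - tau) ^+ 2 * eps ^+ 4))
  (h3 : (cG V e)%:R / (#|edges V e|%:R ^+ 2)
          <= (1 - tau) ^+ 2 * eps ^+ 2 / (16 * Num.sqrt (n%:R))) :
  is_uniformity_tester n e tau eps.
Proof.
have N0 : 0 < n%:R :> R by rewrite ltr0n.
have N1' : 1 <= n%:R :> R by rewrite ler1n.
have nN : n%:R * n%:R^-1 = 1 :> R by rewrite mulfV // gt_eqF.
have Ni0 : 0 < n%:R^-1 :> R by rewrite invr_gt0.
have e2 : 0 < eps ^+ 2 by rewrite exprn_gt0.
have m0 : 0 < #|edges V e|%:R :> R.
  apply: lt_le_trans h1; rewrite divr_gt0 ?mulr_gt0 ?exprn_gt0 //.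
split.
-
  have H1 := unif_sum R hn.
  have p2 : pw (unif R n) 2 = n%:R^-1 by rewrite unif_pw expr2 mulrA nN mul1r.
  have p3 : pw (unif R n) 3 = n%:R^-1 ^+ 2.
    by rewrite unif_pw exprS mulrA nN mul1r.
  have Hv := Var_eq H1 eirr; rewrite p2 p3 subrr mulr0 addr0 in Hv.
  set t2 := (#|edges V e|%:R * (tau * eps ^+ 2) * n%:R^-1) ^+ 2.
  have Hc := @cheb R n V (unif R n)
     (fun S => ~~ outputs_yes R V n e tau eps S)
     (fun S => ((collisions V n e S)%:R - #|edges V e|%:R * pw (unif R n) 2) ^+ 2) t2.
  have Hc' : prob R V n (unif R n) (fun S => ~~ outputs_yes R V n e tau eps S)
     <= 1 / 4.
    apply: le_trans (Hc _ _ _ _) _.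
    - by move=> i; rewrite /unif ltW.
    - by rewrite /t2 exprn_gt0 // !mulr_gt0.
    - by move=> S; exact: sqr_ge0.
    - move=> S; rewrite /outputs_yes /threshold -leNgt p2 => hT.
      rewrite /t2; apply: sq_mono; first by rewrite ltW // !mulr_gt0.
      move: hT; rewrite mulrDr mulr1 -mulrA [X in X <= _ -> _]mulrDl.
      lra.
    rewrite p2 Hv /t2; apply: (@arith_unif R _ n%:R) => //; first by rewrite mulr_gt0.
    by rewrite exprMn -exprM.
  have := prob_compl (fun S => outputs_yes R V n e tau eps S) H1.
  lra.
-
  move=> P [P0 P1] hl.
  have [hd hp3] := far_facts hn (conj P0 P1) heps0 hl.
  move: hd hp3; set d := pw P 2 - n%:R^-1 => hd hp3.
  have d0 : 0 < d by apply: lt_le_trans hd; rewrite mulr_gt0.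
  have p2 : pw P 2 = n%:R^-1 + d by rewrite /d; ring.
  have Hv := Var_eq P1 eirr.
  set B := n%:R^-1 * d + Num.sqrt d * d.
  have B0 : 0 <= B by rewrite /B addr_ge0 ?mulr_ge0 ?sqrtr_ge0 // ltW.
  have HN : ((N1 e)%:R : R) <= (cG V e)%:R by rewrite ler_nat N1_le.
  have Hvb : Ex P (fun S => ((collisions V n e S)%:R - #|edges V e|%:R * pw P 2) ^+ 2)
      <= #|edges V e|%:R * (n%:R^-1 + d) + (cG V e)%:R * B.
    rewrite Hv; apply: lerD.
      have := sqr_ge0 (pw P 2); rewrite -p2; nra.
    apply: le_trans (_ : (N1 e)%:R * B <= _).
      by rewrite ler_wpM2l // ler0n.
    by rewrite ler_wpM2r.
  set t2 := (#|edges V e|%:R * (1 - tau) * d) ^+ 2.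
  have t20 : 0 < t2 by rewrite /t2 exprn_gt0 // !mulr_gt0 // subr_gt0.
  have Hc := @cheb R n V P
     (fun S => outputs_yes R V n e tau eps S)
     (fun S => ((collisions V n e S)%:R - #|edges V e|%:R * pw P 2) ^+ 2) t2.
  have Hc' : prob R V n P (fun S => outputs_yes R V n e tau eps S) <= 1 / 4.
    apply: le_trans (Hc _ _ _ _) _ => //.
    - by move=> S; exact: sqr_ge0.
    - move=> S; rewrite /outputs_yes /threshold p2 => hT.
      rewrite /t2 -[X in _ <= X]sqrrN opprB; apply: sq_mono; first by apply: mulr_ge0; [apply: mulr_ge0; [exact: ltW|rewrite subr_ge0; exact: ltW]|exact: ltW].
      have hm : tau * (eps ^+ 2 * n%:R^-1) <= tau * d by rewrite ler_wpM2l // ltW.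
      have hm2 := ler_wpM2l (ltW m0) hm.
      move: hT.
      lra.
    apply: le_trans (_ : (#|edges V e|%:R * (n%:R^-1 + d) + (cG V e)%:R * B) / t2 <= _).
      by rewrite ler_wpM2r // invr_ge0 ltW.
    rewrite /B /t2.
    apply: (@arith_far R _ n%:R _ eps tau _ _ (Num.sqrt n%:R)) => //.
    all: try by rewrite ?sqrtr_ge0 ?ler0n.
    all: try by rewrite sqr_sqrtr // ltW.
  have := prob_compl (fun S => outputs_yes R V n e tau eps S) P1.
  lra.
Qed.
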